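(* Let $T=([p],E)$ be an undirected tree and let $e=u-v$ be a non-leaf edge of $T$. Let $T_u,T_v$ be the trees obtained by deleting $e$, taking the connected components $T'_u\ni u$ and $T'_v\ni v$, and adding $e$ back to each. Let $Q=\{\operatorname{parting}(\mathcal{T},e):\mathcal{T}\in\mathrm{meq}(T)\}\subseteq\mathrm{meq}(T_u)\times\mathrm{meq}(T_v)$. Then $I_T=I_{T_u}\times_QI_{T_v}$, where the variable $z_{\mathcal{T}}$ of the ambient ring of $I_T$ is identified with the variable $z_{\operatorname{parting}(\mathcal{T},e)}$ of $\mathbb{K}[z_q:q\in Q]$.
   Context: A DAG $\mathcal{G}$ on $[p]$ has parent sets $\mathrm{pa}_{\mathcal{G}}(i)=\{j: j\to i\}$. Its characteristic imset $c_{\mathcal{G}}$ assigns to each $S\subseteq[p]$, $|S|\ge2$, the value $1$ if some $i\in S$ has $S\setminus\{i\}\subseteq\mathrm{pa}_{\mathcal{G}}(i)$, and $0$ otherwise. A v-structure is a triple $i\to j\leftarrow k$ with $i,k$ non-adjacent. The pattern of $\mathcal{G}$ is the partially directed graph obtained by undirecting every edge not belonging to a v-structure; two DAGs are Markov equivalent iff they have the same pattern (equivalently the same skeleton and v-structures, equivalently the same characteristic imset). For an undirected graph $G$, $\mathrm{meq}(G)$ is the set of patterns of DAGs with skeleton $G$; for $\mathcal{P}\in\mathrm{meq}(G)$ fix a DAG $\mathcal{G}(\mathcal{P})$ with that pattern. The characteristic imset ideal $I_G$ is the kernel of $\psi_G:\mathbb{K}[z_{\mathcal{P}}:\mathcal{P}\in\mathrm{meq}(G)]\to\mathbb{K}[t_S:S\subseteq[p],|S|\ge2]$,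 $z_{\mathcal{P}}\mapsto\prod_{S:c_{\mathcal{G}(\mathcal{P})}(S)=1}t_S$. A non-leaf edge is an edge neither of whose endpoints is a leaf. For $\mathcal{T}\in\mathrm{meq}(T)$, $\operatorname{parting}(\mathcal{T},e)=(\mathcal{T}_u,\mathcal{T}_v)$ where $\mathcal{T}_u,\mathcal{T}_v$ are the induced partially directed subgraphs of $\mathcal{T}$ on the vertex sets of $T_u,T_v$, with the edge $e$ modified as follows: if $u\to v$ in $\mathcal{T}$ then $u\to v$ in $\mathcal{T}_v$ and $u-v$ in $\mathcal{T}_u$; if $v\to u$ in $\mathcal{T}$ then $v\to u$ in $\mathcal{T}_u$ and $u-v$ in $\mathcal{T}_v$; if $u-v$ in $\mathcal{T}$ then $u-v$ in both. The ideals $I_{T_u}\subseteq\mathbb{K}[x_{\mathcal{P}}:\mathcal{P}\in\mathrm{meq}(T_u)]$ and $I_{T_v}\subseteq\mathbb{K}[y_{\mathcal{P}}:\mathcal{P}\in\mathrm{meq}(T_v)]$. For $Q\subseteq R_1\times R_2$, $\phi_Q:\mathbb{K}[z_{(a,b)}:(a,b)\in Q]\to\mathbb{K}[x_a,y_b]$ is $z_{(a,b)}\mapsto x_ay_b$ and $I\times_QJ:=\phi_Q^{-1}(I+J)$. *)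

(* Defs.v *)
From HB Require Import structures.
From mathcomp Require Import all_boot all_order all_algebra.
From mathcomp Require Import mpoly.
From Stdlib Require List.

Unset Printing Implicit Defensive.

Import GRing.Theory.
Local Open Scope ring_scope.

(* A directed / partially directed graph is a set D of ordered pairs:        *)
(*   (i,j) \in D and (j,i) \notin D  encodes  i -> j,                        *)
(*   (i,j) \in D and (j,i) \in D     encodes  i - j   (undirected edge).     *)

Definition pgraph (p : nat) := {set 'I_p * 'I_p}.

Section Graphs.
Variable p : nat.
Implicit Types (G : rel 'I_p) (D P : pgraph p).

Definition simple_graph G := (forall i j, G i j = G j i) /\ (forall i, ~~ G i i).

Definition ug_acyclic G :=
  forall c : seq 'I_p, uniq c -> (2 < size c)%N -> ~~ cycle G c.

Definition is_tree G :=
  [/\ simple_graph G, (forall i j, connect G i j) & ug_acyclic G].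

Definition degree G i := #|[set j | G i j]|.
Definition is_leaf G i := degree G i == 1%N.
Definition nonleaf_edge G u v := [&& G u v, ~~ is_leaf G u & ~~ is_leaf G v].

Definition arc D i j := (i, j) \in D.
Definition adjD D i j := arc D i j || arc D j i.
Definition is_dag D :=
  [forall i, forall j, arc D i j ==> ~~ connect (arc D) j i].
Definition has_skeleton G D := [forall i, forall j, G i j == adjD D i j].
Definition pa D i : {set 'I_p} := [set j | arc D j i].

Definition in_vstruct D i j :=
  arc D i j && [exists k, [&& k != i, arc D k j & ~~ adjD D i k]].

(* pattern: undirect every edge not belonging to a v-structure *)
Definition pattern D : pgraph p :=
  [set x | arc D x.1 x.2 || (arc D x.2 x.1 && ~~ in_vstruct D x.2 x.1)].

Definition dags_with_skeleton G : {set pgraph p} :=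
  [set D | is_dag D && has_skeleton G D].

Definition meq G : {set pgraph p} := [set pattern D | D in dags_with_skeleton G].

Definition rep_dag (P : pgraph p) : pgraph p :=
  if [pick D | is_dag D && (pattern D == P)] is Some D then D else set0.

Definition cimset D (S : {set 'I_p}) : bool :=
  (1 < #|S|)%N && [exists i in S, (S :\ i) \subset pa D i].

Definition bigsets : {set {set 'I_p}} := [set S : {set 'I_p} | (1 < #|S|)%N].

End Graphs.

(* K[z_a : a in A] is {mpoly K[#|A|]}, the variable z_a being 'X_j where    *)
(* enum_val j = a.                                                           *)

Section Rings.
Variable K : fieldType.

(* the variable z_a of K[z_a : a in A], sent through an embedding of     *)
(* index sets emb : 'I_#|A| -> 'I_n (used for the identity and for the   *)
(* two halves of K[x_a, y_b]); 0 if a \notin A (never used so).          *)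
Definition var_in (T : finType) (A : {set T}) (n : nat)
    (emb : 'I_#|A| -> 'I_n) (a : T) : {mpoly K[n]} :=
  if [pick j : 'I_#|A| | enum_val j == a] is Some j then 'X_(emb j) else 0.

Definition zvar (T : finType) (A : {set T}) (a : T) : {mpoly K[#|A|]} :=
  var_in T A #|A| id a.

Definition subst (n m : nat) (h : 'I_n -> {mpoly K[m]}) (f : {mpoly K[n]})
  : {mpoly K[m]} := mmap (fun c : K => c%:MP) h f.

Definition ideal_gen (R : comNzRingType) (S : R -> Prop) (f : R) : Prop :=
  exists s : seq (R * R), (forall x, List.In x s -> S x.2) /\
                          f = \sum_(x <- s) x.1 * x.2.

Variable p : nat.

Definition psi (G : rel 'I_p) (f : {mpoly K[#|meq p G|]})
  : {mpoly K[#|bigsets p|]} :=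
  subst #|meq p G| #|bigsets p| (fun j => \prod_(S in bigsets p | cimset p (rep_dag p (enum_val j)) S)
                     zvar _ (bigsets p) S) f.

Definition imset_ideal (G : rel 'I_p) (f : {mpoly K[#|meq p G|]}) : Prop :=
  psi G f = 0.

Section FiberProduct.
Variables (T1 T2 : finType) (R1 : {set T1}) (R2 : {set T2}).
Variable Q : {set T1 * T2}.
Variable I : {mpoly K[#|R1|]} -> Prop.
Variable J : {mpoly K[#|R2|]} -> Prop.

Local Notation N := (#|R1| + #|R2|)%N.

Definition xvar (a : T1) : {mpoly K[N]} := var_in T1 R1 N (@lshift _ #|R2|) a.
Definition yvar (b : T2) : {mpoly K[N]} := var_in T2 R2 N (@rshift #|R1| _) b.

Definition embx (f : {mpoly K[#|R1|]}) : {mpoly K[N]} :=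
  subst _ _ (fun i => 'X_(lshift #|R2| i)) f.
Definition emby (f : {mpoly K[#|R2|]}) : {mpoly K[N]} :=
  subst _ _ (fun i => 'X_(rshift #|R1| i)) f.

Definition ideal_sum (f : {mpoly K[N]}) : Prop :=
  ideal_gen _ (fun g => (exists2 a, I a & g = embx a) \/ (exists2 b, J b & g = emby b)) f.

Definition phiQ (f : {mpoly K[#|Q|]}) : {mpoly K[N]} :=
  subst _ _ (fun j => xvar (enum_val j).1 * yvar (enum_val j).2) f.

Definition fiber_product (f : {mpoly K[#|Q|]}) : Prop := ideal_sum (phiQ f).
End FiberProduct.

End Rings.

(* T_u, T_v are modelled as graphs on the same vertex set [p] (vertices not  *)
(* in T_u, resp. T_v, being isolated).                         *)
Section Parting.
Variables (p : nat) (T : rel 'I_p) (u v : 'I_p).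

Definition is_e (a b : 'I_p) := ((a == u) && (b == v)) || ((a == v) && (b == u)).

Definition T_del : rel 'I_p := fun a b => T a b && ~~ is_e a b.

Definition comp_u : {set 'I_p} := [set x | connect T_del u x].
Definition comp_v : {set 'I_p} := [set x | connect T_del v x].

Definition T_u : rel 'I_p :=
  fun a b => [&& T_del a b, a \in comp_u & b \in comp_u] || is_e a b.
Definition T_v : rel 'I_p :=
  fun a b => [&& T_del a b, a \in comp_v & b \in comp_v] || is_e a b.

Definition Vu : {set 'I_p} := v |: comp_u.
Definition Vv : {set 'I_p} := u |: comp_v.

Definition part_u (P : pgraph p) : pgraph p :=
  [set x in P | (x.1 \in Vu) && (x.2 \in Vu)]
    :|: (if (u, v) \in P then [set (u, v); (v, u)] else set0).
Definition part_v (P : pgraph p) : pgraph p :=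
  [set x in P | (x.1 \in Vv) && (x.2 \in Vv)]
    :|: (if (v, u) \in P then [set (u, v); (v, u)] else set0).
Definition parting (P : pgraph p) : pgraph p * pgraph p := (part_u P, part_v P).

Definition Qpart : {set pgraph p * pgraph p} := [set parting P | P in meq p T].

End Parting.

Definition rename (K : fieldType) (p : nat) (T : rel 'I_p) (u v : 'I_p)
    (f : {mpoly K[#|meq p T|]}) : {mpoly K[#|Qpart p T u v|]} :=
  subst K _ _ (fun i => zvar K _ (Qpart p T u v) (parting p T u v (enum_val i))) f.

(* Main.v *)
Require Import Defs.
From HB Require Import structures.
From mathcomp Require Import all_boot all_order all_algebra.
From mathcomp Require Import mpoly.
From mathcomp Require Import zify ring.
From Stdlib Require Import FunctionalExtensionality.
Set Implicit Arguments. Unset Strict Implicit.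

Section Tree.
Variables (p : nat) (T : rel 'I_p) (u v : 'I_p).
Hypothesis Htree : is_tree p T.
Hypothesis Huv : T u v.

Let Tsym : forall i j, T i j = T j i.
Proof. by case: Htree => [[]]. Qed.
Let Tirr : forall i, ~~ T i i.
Proof. by case: Htree => [[]]. Qed.

Lemma tree_neq : u != v.
Proof. by apply/eqP => e; move: Huv; rewrite e (negbTE (Tirr v)). Qed.

Lemma tree_tri : forall a b c, T a b -> T b c -> T a c -> False.
Proof.
move=> a b c ab bc ac; case: Htree => _ _ /(_ [:: a; b; c]).
have ab' : a != b by apply/eqP => e; move: ab; rewrite e (negbTE (Tirr b)).
have bc' : b != c by apply/eqP => e; move: bc; rewrite e (negbTE (Tirr c)).
have ac' : a != c by apply/eqP => e; move: ac; rewrite e (negbTE (Tirr c)).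
by rewrite /= !inE negb_or ab' ac' bc' ab bc Tsym ac => /(_ isT isT).
Qed.

Lemma is_eE a b : is_e p u v a b = ((a == u) && (b == v)) || ((a == v) && (b == u)).
Proof. by []. Qed.

Lemma is_e_T a b : is_e p u v a b -> T a b.
Proof. by rewrite is_eE => /orP [] /andP [/eqP -> /eqP ->]; rewrite // Tsym. Qed.

Lemma Tdel_sym : ssrbool.symmetric (T_del p T u v).
Proof. move=> a b; rewrite /T_del Tsym /is_e; by case: (a == u); case: (a == v); case: (b == u); case: (b == v); rewrite ?andbF. Qed.

Lemma not_conn : ~~ connect (T_del p T u v) u v.
Proof.
apply/negP => /connectP [q pq lq].
move: lq; case: (shortenP pq) => q' pq' uq _ lq'.
case: Htree => _ _ Hac.
have cyc : cycle T (u :: q').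
  rewrite /cycle rcons_path -lq' Tsym Huv andbT.
  by apply: (sub_path _ pq') => a b /andP [].
have sz : 2 < size (u :: q').
  move: pq' uq lq'; case: q' {cyc} => [|a [|b q']] //=.
  - by move=> _ _ e; move: tree_neq; rewrite e eqxx.
  - rewrite /T_del is_eE eqxx andbT => /andP [_ /negP H] _ e; case: H; by rewrite e eqxx.
by move: (Hac _ uq sz); rewrite cyc.
Qed.

Lemma u_comp : u \in comp_u p T u v.
Proof. by rewrite inE connect0. Qed.
Lemma v_notcomp : v \notin comp_u p T u v.
Proof. by rewrite inE not_conn. Qed.

Lemma comp_nbr x y : x \in comp_u p T u v -> T x y -> (y \in comp_u p T u v) || is_e p u v x y.
Proof.
rewrite !inE => cx txy; case e: (is_e p u v x y); rewrite ?orbT //= orbF.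
apply: connect_trans cx (connect1 _); by rewrite /T_del txy e.
Qed.

Lemma comp_nbr_V x y : x \in comp_u p T u v -> T x y -> y \in Vu p T u v.
Proof.
move=> cx txy; rewrite /Vu in_setU1; case/orP: (comp_nbr cx txy) => [->|]; rewrite ?orbT //.
by rewrite is_eE => /orP [] /andP [_ /eqP ->]; rewrite ?eqxx // u_comp orbT.
Qed.

Lemma v_nbr y : T v y -> y \in Vu p T u v -> y = u.
Proof.
move=> tvy; rewrite /Vu in_setU1 => /orP [/eqP e|cy]; first by move: tvy; rewrite e (negbTE (Tirr v)).
have tyv : T y v by rewrite Tsym.
case/orP: (comp_nbr cy tyv); first by rewrite (negbTE v_notcomp).
by rewrite is_eE => /orP [] /andP [/eqP -> /eqP e] //; move: tree_neq; rewrite e eqxx.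
Qed.

End Tree.


Section Swap.
Variables (p : nat) (T : rel 'I_p) (u v : 'I_p).
Lemma is_e_swap : is_e p v u = is_e p u v.
Proof. apply: functional_extensionality => a; apply: functional_extensionality => b; by rewrite /is_e orbC. Qed.
Lemma Tdel_swap : T_del p T v u = T_del p T u v.
Proof. by rewrite /T_del is_e_swap. Qed.
Lemma comp_swap : comp_u p T v u = comp_v p T u v.
Proof. by rewrite /comp_u /comp_v Tdel_swap. Qed.
Lemma Vu_swap : Vu p T v u = Vv p T u v.
Proof. by rewrite /Vu /Vv comp_swap. Qed.
Lemma Tu_swap : T_u p T v u = T_v p T u v.
Proof. by rewrite /T_u /T_v Tdel_swap comp_swap is_e_swap. Qed.
Lemma part_swap P : part_u p T v u P = part_v p T u v P.
Proof. by rewrite /part_u /part_v Vu_swap [[set (v, u); (u, v)]]setUC. Qed.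
End Swap.

Section Tree2.
Variables (p : nat) (T : rel 'I_p) (u v : 'I_p).
Hypothesis Htree : is_tree p T.
Hypothesis Huv : T u v.

Let Tsym : forall i j, T i j = T j i.
Proof. by case: Htree => [[]]. Qed.
Let Tirr : forall i, ~~ T i i.
Proof. by case: Htree => [[]]. Qed.
Let Hvu : T v u. Proof. by rewrite Tsym. Qed.

Lemma v_comp : v \in comp_v p T u v.
Proof. by rewrite -comp_swap u_comp. Qed.
Lemma u_notcompv : u \notin comp_v p T u v.
Proof. by rewrite -comp_swap v_notcomp. Qed.
Lemma compv_nbr x y : x \in comp_v p T u v -> T x y -> (y \in comp_v p T u v) || is_e p u v x y.
Proof. rewrite -comp_swap -is_e_swap; exact: comp_nbr. Qed.
Lemma compv_nbr_V x y : x \in comp_v p T u v -> T x y -> y \in Vv p T u v.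
Proof. rewrite -comp_swap -Vu_swap; exact: comp_nbr_V. Qed.
Lemma u_nbr y : T u y -> y \in Vv p T u v -> y = v.
Proof. rewrite -Vu_swap; exact: v_nbr. Qed.

Lemma cover x : (x \in comp_u p T u v) || (x \in comp_v p T u v).
Proof.
pose a := [pred y | (y \in comp_u p T u v) || (y \in comp_v p T u v)].
have cl1 y z : y \in a -> T y z -> z \in a.
  rewrite inE => /orP [] cy tyz; rewrite inE.
    case/orP: (comp_nbr cy tyz) => [->//|].
    by rewrite is_eE => /orP [] /andP [_ /eqP ->]; rewrite ?u_comp ?v_comp ?orbT.
  case/orP: (compv_nbr cy tyz) => [->|]; rewrite ?orbT //.
  by rewrite is_eE => /orP [] /andP [_ /eqP ->]; rewrite ?u_comp ?v_comp ?orbT.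
have cl : closed T a.
  move=> y z tyz; apply/idP/idP => h; first exact: cl1 h tyz.
  by apply: cl1 h _; rewrite Tsym.
case: Htree => _ Hc _.
have := closed_connect cl (Hc u x); rewrite [u \in a]inE u_comp /= => h; by move: h; rewrite inE.
Qed.

Lemma disj x : x \in comp_u p T u v -> x \in comp_v p T u v -> False.
Proof.
rewrite !inE => cu cv.
have cs := sym_connect_sym (Tdel_sym u v Htree).
move: (not_conn Htree Huv); rewrite (connect_trans cu) //.
by rewrite cs.
Qed.

Lemma Tu_iff a b : T_u p T u v a b = [&& T a b, a \in Vu p T u v & b \in Vu p T u v].
Proof.
apply/idP/idP.
  rewrite /T_u => /orP [/and3P [tab ca cb]|e].
    by move: tab => /andP [-> _]; rewrite /Vu !in_setU1 ca cb !orbT.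
  rewrite (is_e_T Htree Huv e) /Vu !in_setU1.
  by move: e; rewrite is_eE => /orP [] /andP [/eqP -> /eqP ->]; rewrite ?eqxx ?u_comp ?orbT.
case/and3P => tab; rewrite /T_u /Vu !in_setU1.
case e: (is_e p u v a b); rewrite ?orbT // orbF.
have td : T_del p T u v a b by rewrite /T_del tab e.
have Vca : forall x, x \in comp_u p T u v -> x \in Vu p T u v by move=> x cx; rewrite /Vu in_setU1 cx orbT.
case/orP => [/eqP ea|ca].
  case/orP => [/eqP eb|cb]; first by move: tab; rewrite ea eb (negbTE (Tirr v)).
  have tvb : T v b by rewrite -ea.
  move: e; rewrite (v_nbr Htree Huv tvb (Vca _ cb)) ea is_eE !eqxx orbT //.
case/orP => [/eqP eb|cb]; last by rewrite td ca cb.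
have tva : T v a by rewrite -eb Tsym.
move: e; rewrite (v_nbr Htree Huv tva (Vca _ ca)) eb is_eE !eqxx //.
Qed.


Lemma VuVv x : x \in Vu p T u v -> x \in Vv p T u v -> (x == u) || (x == v).
Proof.
rewrite /Vu /Vv !in_setU1 => /orP [->|cu]; rewrite ?orbT // => /orP [->//|cv].
by case: (disj cu cv).
Qed.

Lemma edge_cover a b : T a b -> (a \in Vu p T u v) && (b \in Vu p T u v) || (a \in Vv p T u v) && (b \in Vv p T u v).
Proof.
move=> tab; case/orP: (cover a) => ca.
  by rewrite (comp_nbr_V ca tab) /Vu in_setU1 ca orbT.
have Va : a \in Vv p T u v by rewrite /Vv in_setU1 ca orbT.
by rewrite (compv_nbr_V ca tab) Va orbT.
Qed.

Lemma nbr_cover i : {subset [pred j | T i j] <= Vu p T u v} /\ i \in Vu p T u v \/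
                    {subset [pred j | T i j] <= Vv p T u v} /\ i \in Vv p T u v.
Proof.
case/orP: (cover i) => ci; [left|right]; split.
- by move=> j; rewrite inE => tij; apply: comp_nbr_V ci tij.
- by rewrite /Vu in_setU1 ci orbT.
- by move=> j; rewrite inE => tij; apply: compv_nbr_V ci tij.
- by rewrite /Vv in_setU1 ci orbT.
Qed.
End Tree2.

Lemma Tv_iff p T (u v : 'I_p) : is_tree p T -> T u v -> forall a b, T_v p T u v a b = [&& T a b, a \in Vv p T u v & b \in Vv p T u v].
Proof.
move=> Ht Huv a b; have Hvu : T v u by case: Ht => [[Ts _] _ _]; rewrite Ts.
by rewrite -Tu_swap -Vu_swap (Tu_iff Ht Hvu).
Qed.

Section Char.
Variable p : nat.
Implicit Types (G : rel 'I_p) (D P : pgraph p) (S : {set 'I_p}).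

Definition tri_free G := forall a b c, G a b -> G b c -> G a c -> False.

Definition inP P (i : 'I_p) : {set 'I_p} := [set j | ((j, i) \in P) && ((i, j) \notin P)].

Definition Fc G P S : bool :=
  (1 < #|S|) && (if #|S| == 2 then [forall i in S, forall j in S, (i != j) ==> G i j]
                 else [exists i in S, S :\ i \subset inP P i]).

Lemma in_pattern D x : (x \in pattern p D) = Defs.arc p D x.1 x.2 || (Defs.arc p D x.2 x.1 && ~~ in_vstruct p D x.2 x.1).
Proof. by rewrite inE. Qed.

Lemma dag_antisym D i j : is_dag p D -> Defs.arc p D i j -> Defs.arc p D j i -> False.
Proof.
move=> /forallP /(_ i) /forallP /(_ j) /implyP H a1 a2.
by move: (H a1); rewrite (connect1 a2).
Qed.

Lemma dag_irr D i : is_dag p D -> Defs.arc p D i i -> False.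
Proof. by move=> H a; apply: (dag_antisym H a a). Qed.

Lemma inP_pa D i : inP (pattern p D) i \subset pa p D i.
Proof.
apply/subsetP => j; rewrite !inE /= => /andP [].
case/orP => // /andP [a _]; by rewrite a.
Qed.

Lemma skelP G D i j : has_skeleton p G D -> G i j = adjD p D i j.
Proof. by move=> /forallP /(_ i) /forallP /(_ j) /eqP. Qed.

Lemma Fc_char G D S : simple_graph p G -> tri_free G -> is_dag p D -> has_skeleton p G D ->
  cimset p D S = Fc G (pattern p D) S.
Proof.
move=> [Gs Gi] tf dD sk.
rewrite /cimset /Fc; case: ltnP => //= S2.
case: ifP => [/cards2P [a [b [ab ->]]]|S3].
  have ba : b != a by rewrite eq_sym.
  have E1 : [set a; b] :\ a = [set b].
    by apply/setP => x; rewrite !inE; case: (eqVneq x a) => [->|xa]; rewrite ?eqxx /= ?(negbTE ab) ?(negbTE xa) //.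
  have E2 : [set a; b] :\ b = [set a].
    by apply/setP => x; rewrite !inE; case: (eqVneq x b) => [->|xb]; rewrite ?eqxx /= ?(negbTE ba) ?(negbTE xb) ?orbF //.
  apply/idP/idP.
    have pf : G a b -> [forall i in [set a; b], forall j in [set a; b], (i != j) ==> G i j].
      move=> g; apply/forall_inP => x xS; apply/forall_inP => y yS; apply/implyP => xy.
      move: xS yS xy; rewrite !inE => /orP [] /eqP -> /orP [] /eqP -> ; rewrite ?eqxx //= => _; by rewrite Gs.
    case/exists_inP => i; rewrite !inE => /orP [] /eqP -> ; rewrite ?E1 ?E2 sub1set inE => h;
      apply: pf; rewrite (skelP _ _ sk) /adjD h ?orbT //.
  move=> /forall_inP /(_ a) ; rewrite !inE eqxx => /(_ isT) /forall_inP /(_ b); rewrite !inE eqxx orbT ab => /(_ isT) /=.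
  rewrite (skelP _ _ sk) => /orP [] h.
    apply/exists_inP; exists b; rewrite ?inE ?eqxx ?orbT // E2 sub1set inE //.
  apply/exists_inP; exists a; rewrite ?inE ?eqxx ?orbT // E1 sub1set inE //.
apply/idP/idP; case/exists_inP => i iS h; apply/exists_inP; exists i => //.
2: exact: subset_trans h (inP_pa D i).
have S3' : 2 < #|S| by rewrite ltn_neqAle eq_sym S3 S2.
apply/subsetP => j jS; move: (jS); rewrite !inE => /andP [ji jS0].
have: 0 < #|S :\ i :\ j|.
  move: S3'; rewrite (cardsD1 i S) iS (cardsD1 j (S :\ i)) jS /=; lia.
move/card_gt0P => [k kS].
move: kS; rewrite !inE => /and3P [kj ki kS0].
have pj : Defs.arc p D j i by move/subsetP: h => /(_ j jS); rewrite inE.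
have pk : Defs.arc p D k i by move/subsetP: h => /(_ k); rewrite !inE ki kS0 => /(_ isT).
have nadj : ~~ adjD p D j k.
  apply/negP => a; apply: (tf j i k); rewrite ?(skelP _ _ sk) /adjD ?pj ?pk ?orbT //.
rewrite /= pj /=; apply/negP; case/orP.
  by move=> a; apply: (dag_antisym dD pj a).
move/negP; apply; rewrite /in_vstruct pj /=.
by apply/existsP; exists k; rewrite kj pk nadj.
Qed.
End Char.

Section Gen.
Variable p : nat.
Implicit Types (G : rel 'I_p) (D P : pgraph p).

Lemma inP_mem (Q : pgraph p) i j : (j \in inP Q i) = ((j, i) \in Q) && ((i, j) \notin Q).
Proof. by rewrite inE. Qed.

Lemma pattern_adj D x : x \in pattern p D -> adjD p D x.1 x.2.
Proof. by rewrite in_pattern /adjD => /orP [->|/andP [-> _]]; rewrite ?orbT. Qed.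

Lemma arc_pattern D a b : Defs.arc p (pattern p D) a b = Defs.arc p D a b || (Defs.arc p D b a && ~~ in_vstruct p D b a).
Proof. by rewrite /Defs.arc inE. Qed.

Lemma adjD_pattern D a b : adjD p (pattern p D) a b = adjD p D a b.
Proof.
unfold adjD; rewrite !arc_pattern.
destruct (Defs.arc p D a b), (Defs.arc p D b a); by rewrite /= ?orbT ?orbF ?andbF.
Qed.


Lemma meqP G P : reflect (exists D, [/\ is_dag p D, has_skeleton p G D & P = pattern p D]) (P \in meq p G).
Proof.
apply: (iffP imsetP) => [[D] | [D [d s ->]]].
  by rewrite inE => /andP [d s] ->; exists D.
by exists D => //; rewrite inE d s.
Qed.

Lemma rep_dagP G P : P \in meq p G ->
  [/\ is_dag p (rep_dag p P), has_skeleton p G (rep_dag p P) & pattern p (rep_dag p P) = P].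
Proof.
case/meqP => D [d s eP]; rewrite /rep_dag.
case: pickP => [D' /andP [d' /eqP e']|].
  split => //; apply/forallP => i; apply/forallP => j.
  by rewrite -adjD_pattern e' eP adjD_pattern (skelP _ _ s).
by move/(_ D); rewrite d eP eqxx.
Qed.

Lemma pattern_skel G D x : has_skeleton p G D -> x \in pattern p D -> G x.1 x.2.
Proof. by move=> s /pattern_adj; rewrite (skelP _ _ s). Qed.

Lemma cimset_rep G P S : simple_graph p G -> tri_free G -> P \in meq p G ->
  cimset p (rep_dag p P) S = Fc G P S.
Proof.
move=> sG tG /rep_dagP [d s e].
by rewrite (Fc_char _ sG tG d s) e.
Qed.

Lemma pair_forall G a b : (forall i j, G i j = G j i) -> a != b ->
  [forall i in [set a; b], forall j in [set a; b], (i != j) ==> G i j] = G a b.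
Proof.
move=> Gs ab; apply/idP/idP.
  by move/forall_inP/(_ a); rewrite !inE eqxx => /(_ isT) /forall_inP /(_ b); rewrite !inE eqxx orbT ab => /(_ isT).
move=> g; apply/forall_inP => x xS; apply/forall_inP => y yS; apply/implyP => xy.
move: xS yS xy; rewrite !inE => /orP [] /eqP -> /orP [] /eqP -> ; rewrite ?eqxx //= => _; by rewrite Gs.
Qed.

End Gen.

Section Part.
Variables (p : nat) (T : rel 'I_p) (u v : 'I_p).
Hypothesis Htree : is_tree p T.
Hypothesis Huv : T u v.

Let Tsym : forall i j, T i j = T j i.
Proof. by case: Htree => [[]]. Qed.
Let Tirr : forall i, ~~ T i i.
Proof. by case: Htree => [[]]. Qed.

Local Notation Vu := (Vu p T u v).
Local Notation comp_u := (comp_u p T u v).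
Local Notation Tu := (T_u p T u v).

Lemma in_part_u P x : (x \in part_u p T u v P) =
  ((x \in P) && (x.1 \in Vu) && (x.2 \in Vu)) || (((u, v) \in P) && ((x == (u, v)) || (x == (v, u)))).
Proof.
rewrite /part_u in_setU inE andbA; case: ((u, v) \in P) => /=; rewrite ?inE //.
Qed.

Lemma u_Vu : u \in Vu. Proof. by rewrite /Vu in_setU1 u_comp orbT. Qed.
Lemma v_Vu : v \in Vu. Proof. by rewrite /Vu in_setU1 eqxx. Qed.

Lemma part_u_sub P x : x \in part_u p T u v P -> (x.1 \in Vu) && (x.2 \in Vu).
Proof.
rewrite in_part_u => /orP [/andP [/andP [_ ->] ->] //|/andP [_ /orP [] /eqP ->]] /=;
by rewrite u_Vu v_Vu.
Qed.

Let Vca : forall x, x \in comp_u -> x \in Vu.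
Proof. by move=> x cx; rewrite /Vu in_setU1 cx orbT. Qed.

Lemma Vu_cases x : x \in Vu -> (x == v) || (x \in comp_u).
Proof. by rewrite /Vu in_setU1. Qed.

Section WithD.
Variable D : pgraph p.
Hypothesis dD : is_dag p D.
Hypothesis sD : has_skeleton p T D.

Definition Du : pgraph p := [set x in D | (x.1 \in Vu) && (x.2 \in Vu)].

Lemma arc_Du a b : Defs.arc p Du a b = [&& Defs.arc p D a b, a \in Vu & b \in Vu].
Proof. by rewrite /Defs.arc inE. Qed.

Lemma arcT a b : Defs.arc p D a b -> T a b.
Proof. by move=> h; rewrite (skelP _ _ sD) /adjD h. Qed.

Lemma adjDu a b : a \in Vu -> b \in Vu -> adjD p Du a b = adjD p D a b.
Proof. by move=> ha hb; rewrite /adjD !arc_Du ha hb !andbT. Qed.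

Lemma vs_Du a b : a \in Vu -> b \in comp_u -> in_vstruct p Du a b = in_vstruct p D a b.
Proof.
move=> ha hb; rewrite /in_vstruct arc_Du ha (Vca hb) !andbT.
case: (Defs.arc p D a b) => //=.
apply: eq_existsb => k.
case ak: (Defs.arc p D k b); last by rewrite arc_Du ak !andbF.
have kV : k \in Vu by apply: comp_nbr_V hb _; rewrite Tsym arcT.
by rewrite arc_Du ak kV (Vca hb) adjDu.
Qed.

Lemma vs_Du_v a : in_vstruct p Du a v = false.
Proof.
apply/negP; rewrite /in_vstruct arc_Du => /andP [/and3P [aa av _] /existsP [k /and3P [ka kk _]]].
move: kk; rewrite arc_Du => /and3P [kk kv _].
have tva : T v a by rewrite Tsym; apply: arcT.
have tvk : T v k by rewrite Tsym; apply: arcT.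
have e1 := v_nbr Htree Huv tva av.
have e2 := v_nbr Htree Huv tvk kv.
by move: ka; rewrite e1 e2 eqxx.
Qed.

Lemma Du_dag : is_dag p Du.
Proof.
apply/forallP => i; apply/forallP => j; apply/implyP; rewrite arc_Du => /and3P [a _ _].
move: dD => /forallP /(_ i) /forallP /(_ j) /implyP /(_ a); apply: contra.
apply: connect_sub => x y; rewrite arc_Du => /and3P [h _ _]; exact: connect1.
Qed.

Lemma Du_skel : has_skeleton p Tu Du.
Proof.
apply/forallP => i; apply/forallP => j; apply/eqP.
rewrite (Tu_iff Htree Huv) /adjD !arc_Du (skelP _ _ sD) /adjD.
by case: (Defs.arc p D i j); case: (Defs.arc p D j i); case: (i \in Vu); case: (j \in Vu).
Qed.

Lemma Du_pattern : pattern p Du = part_u p T u v (pattern p D).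
Proof.
apply/setP => [[a b]]; rewrite in_part_u in_pattern /=.
rewrite -![(_, _) \in pattern p D]/(Defs.arc p (pattern p D) _ _) !arc_pattern.
rewrite !arc_Du.
case ha: (a \in Vu); last first.
  rewrite /= ?andbF ?andFb /= ?andbF ?andFb /=; apply/esym/negP => /andP [_ /orP [] /eqP [ea eb]]; move: ha;
  by rewrite ea ?u_Vu ?v_Vu.
case hb: (b \in Vu); last first.
  rewrite /= ?andbF ?andFb /= ?andbF ?andFb /=; apply/esym/negP => /andP [_ /orP [] /eqP [ea eb]]; move: hb;
  by rewrite eb ?u_Vu ?v_Vu.
rewrite !andbT.
case: (eqVneq a v) => [ea|av].
  subst a; case: (eqVneq b u) => [eb|bu].
    subst b; rewrite vs_Du_v /= !eqxx /= orbT andbT.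
    have := Huv; rewrite (skelP _ _ sD) /adjD.
    by case: (Defs.arc p D u v); case: (Defs.arc p D v u); rewrite //= ?orbT.
  have nbv : Defs.arc p D b v = false.
    apply/negP => h; move: bu; rewrite (v_nbr Htree Huv (_ : T v b) hb) ?eqxx //.
    by rewrite Tsym; apply: arcT.
  have nvb : Defs.arc p D v b = false.
    apply/negP => h; move: bu; rewrite (v_nbr Htree Huv (_ : T v b) hb) ?eqxx //.
    by apply: arcT.
  rewrite nbv nvb /= !xpair_eqE (negbTE bu) andbF /=.
  case: (eqVneq v u) => [e|_]; last by rewrite andbF.
  by move: (tree_neq Htree Huv); rewrite e eqxx.
have ca : a \in comp_u by move: (Vu_cases ha); rewrite (negbTE av).
rewrite (vs_Du hb ca).
case: (eqVneq (a, b) (u, v)) => [e|ne].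
  case: e => -> ->; rewrite /= andbT.
  by case: (Defs.arc p D u v || _).
by rewrite xpair_eqE (negbTE av) /= andbF orbF.
Qed.

End WithD.

Lemma part_u_meq P : P \in meq p T -> part_u p T u v P \in meq p Tu.
Proof.
case/meqP => D [d s ->]; apply/meqP; exists (Du D); split.
- exact: Du_dag.
- exact: Du_skel.
- by rewrite Du_pattern.
Qed.

Lemma T_simple : simple_graph p T.
Proof. by case: Htree. Qed.

Lemma Tu_simple : simple_graph p Tu.
Proof.
split => [a b|a]; rewrite !(Tu_iff Htree Huv).
  by rewrite Tsym; case: (T b a); case: (a \in Vu); case: (b \in Vu).
by rewrite (negbTE (Tirr a)).
Qed.

Lemma Tu_tri : tri_free Tu.
Proof.
move=> a b c; rewrite !(Tu_iff Htree Huv) => /andP [ab _] /andP [bc _] /andP [ac _].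
exact: (tree_tri Htree ab bc ac).
Qed.

Lemma card_contra (S : {set 'I_p}) i w : 2 < #|S| -> S :\ i \subset [set w] -> False.
Proof.
move=> S3 sub; have := subset_leq_card sub; rewrite cards1.
case iS: (i \in S).
  by move: S3; rewrite (cardsD1 i S) iS /=; lia.
have -> : S :\ i = S by apply/setP => x; rewrite !inE; case: (eqVneq x i) => // ->; rewrite iS.
lia.
Qed.

Section Key.
Variable P : pgraph p.
Hypothesis HP : P \in meq p T.
Local Notation Pu := (part_u p T u v P).

Lemma inPu_V i j : j \in inP Pu i -> (i \in Vu) && (j \in Vu).
Proof. by rewrite inE => /andP [/part_u_sub /= /andP [-> ->] _]. Qed.

Lemma inP_T i j : j \in inP P i -> T i j.
Proof.
case/meqP: HP => D [d s eP]; rewrite inE eP => /andP [h _].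
by rewrite Tsym; apply: (pattern_skel s h).
Qed.

Lemma inPu_T i j : j \in inP Pu i -> T i j.
Proof.
case/meqP: HP => D [d s eP]; rewrite inE eP -(Du_pattern s) => /andP [h _].
have := pattern_skel (Du_skel s) h; rewrite /= (Tu_iff Htree Huv) Tsym.
by case/andP.
Qed.

Lemma inP_eq i j : i \in Vu -> i != v -> j \in Vu -> (j \in inP Pu i) = (j \in inP P i).
Proof.
move=> iV iv jV; rewrite !inP_mem !in_part_u /= iV jV !andbT.
case: (eqVneq i u) => [ei|iu].
  subst i; case: (eqVneq j v) => [ej|jv].
    subst j; rewrite !eqxx /= orbT.
    by case: ((v, u) \in P); case: ((u, v) \in P).
  by rewrite !xpair_eqE (negbTE iv) (negbTE jv) /= !andbF !orbF.
by rewrite !xpair_eqE (negbTE iv) (negbTE iu) /= !andbF !orbF.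
Qed.

Lemma key_u S : Fc Tu Pu S = Fc T P S && (S \subset Vu).
Proof.
rewrite /Fc; case: ltnP => S2 //=.
case: ifP => [/cards2P [a [b [ab ->]]]|S3].
  have [Ts _] := T_simple; have [Tus _] := Tu_simple.
  rewrite (pair_forall Tus ab) (pair_forall Ts ab).
  by rewrite (Tu_iff Htree Huv) subUset !sub1set andbA.
have S3' : 2 < #|S| by rewrite ltn_neqAle eq_sym S3 S2.
have ne : forall i, exists j, j \in S :\ i.
  move=> i; apply/set0Pn; rewrite -card_gt0; move: S3'; rewrite (cardsD1 i S).
  by case: (i \in S) => /=; lia.
apply/idP/idP.
  case/exists_inP => i iS h.
  have [j jS] := ne i.
  have /andP [iV _] := inPu_V (subsetP h _ jS).
  have SV : S \subset Vu.
    apply/subsetP => x xS; case: (eqVneq x i) => [->//|xi].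
    have : x \in S :\ i by rewrite !inE xi xS.
    by move/(subsetP h)/inPu_V/andP => [].
  have iv : i != v.
    apply/eqP => ei; subst i; apply: (@card_contra S v u S3').
    apply/subsetP => x /(subsetP h) xi; rewrite inE; apply/eqP.
    have /andP [_ xV] := inPu_V xi.
    exact: (v_nbr Htree Huv (inPu_T xi) xV).
  rewrite SV andbT; apply/exists_inP; exists i => //; apply/subsetP => x xS.
  rewrite -inP_eq //; first exact: (subsetP h).
  by apply: (subsetP SV); move: xS; rewrite inE => /andP [].
case/andP => /exists_inP [i iS h] SV.
have iV : i \in Vu by apply: (subsetP SV).
have iv : i != v.
  apply/eqP => ei; subst i; apply: (@card_contra S v u S3').
  apply/subsetP => x xS; rewrite inE; apply/eqP.
  have xV : x \in Vu by apply: (subsetP SV); move: xS; rewrite inE => /andP [].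
  exact: (v_nbr Htree Huv (inP_T (subsetP h _ xS)) xV).
apply/exists_inP; exists i => //; apply/subsetP => x xS.
have xV : x \in Vu by apply: (subsetP SV); move: xS; rewrite inE => /andP [].
by rewrite inP_eq //; apply: (subsetP h).
Qed.

End Key.
End Part.

Lemma part_u_mem p (T : rel 'I_p) (u v : 'I_p) P a b :
  a \in Vu p T u v -> b \in Vu p T u v -> (a, b) != (v, u) ->
  ((a, b) \in part_u p T u v P) = ((a, b) \in P).
Proof.
move=> ha hb nvu; rewrite in_part_u /= ha hb !andbT (negbTE nvu) orbF.
case: (eqVneq (a, b) (u, v)) => [e|]; last by rewrite andbF orbF.
by rewrite e andbT orbb.
Qed.

Lemma part_v_mem p (T : rel 'I_p) (u v : 'I_p) P a b :
  a \in Vv p T u v -> b \in Vv p T u v -> (a, b) != (u, v) ->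
  ((a, b) \in part_v p T u v P) = ((a, b) \in P).
Proof. rewrite -part_swap -Vu_swap; exact: part_u_mem. Qed.

Lemma meq_edge p (G : rel 'I_p) P x : P \in meq p G -> x \in P -> G x.1 x.2.
Proof. by case/meqP => D [_ s ->]; apply: pattern_skel. Qed.

Section Comb.
Variables (p : nat) (T : rel 'I_p) (u v : 'I_p).
Hypothesis Htree : is_tree p T.
Hypothesis Huv : T u v.
Let Tsym : forall i j, T i j = T j i.
Proof. by case: Htree => [[]]. Qed.
Let Hvu : T v u. Proof. by rewrite Tsym. Qed.

Local Notation Vu := (Vu p T u v).
Local Notation Vv := (Vv p T u v).
Local Notation Pu P := (part_u p T u v P).
Local Notation Pv P := (part_v p T u v P).
Local Notation cT P S := (cimset p (rep_dag p P) S).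

Lemma part_v_meq P : P \in meq p T -> Pv P \in meq p (T_v p T u v).
Proof. by move=> HP; rewrite -part_swap -Tu_swap (part_u_meq Htree Hvu HP). Qed.

Lemma cim_u P S : P \in meq p T -> cT (Pu P) S = cT P S && (S \subset Vu).
Proof.
move=> HP.
rewrite (cimset_rep _ (Tu_simple Htree Huv) (Tu_tri Htree Huv) (part_u_meq Htree Huv HP)).
rewrite (cimset_rep _ (T_simple Htree) (tree_tri Htree) HP).
exact: key_u.
Qed.

Lemma cim_v P S : P \in meq p T -> cT (Pv P) S = cT P S && (S \subset Vv).
Proof.
move=> HP.
rewrite -part_swap -Vu_swap.
rewrite (cimset_rep _ (Tu_simple Htree Hvu) (Tu_tri Htree Hvu) (part_u_meq Htree Hvu HP)).
rewrite (cimset_rep _ (T_simple Htree) (tree_tri Htree) HP).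
exact: key_u.
Qed.

Lemma cim_cover P S : P \in meq p T -> cT P S -> (S \subset Vu) || (S \subset Vv).
Proof.
move=> HP; rewrite (cimset_rep _ (T_simple Htree) (tree_tri Htree) HP) /Fc => /andP [S2].
case: ifP => [/cards2P [a [b [ab ->]]]|_].
  rewrite (pair_forall Tsym ab) => tab.
  by rewrite !subUset !sub1set (@edge_cover p T u v Htree a b tab).
case/exists_inP => i iS h.
have sub : forall W : {set 'I_p}, {subset [pred j | T i j] <= W} -> i \in W -> S \subset W.
  move=> W nW iW; apply/subsetP => x xS; case: (eqVneq x i) => [->//|xi].
  apply: nW; rewrite inE; apply: (@inP_T p T Htree P HP).
  by apply: (subsetP h); rewrite !inE xi.
case: (@nbr_cover p T u v Htree i) => [[nW iW]|[nW iW]].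
  by rewrite (sub _ nW iW).
by rewrite (sub _ nW iW) orbT.
Qed.

Lemma uv_set (S : {set 'I_p}) : 1 < #|S| -> S \subset Vu -> S \subset Vv -> S = [set u; v].
Proof.
move=> S2 su sv; suff: S == [set u; v] by move/eqP.
rewrite eqEcard; apply/andP; split.
  apply/subsetP => x xS; rewrite !inE.
  exact: (@VuVv p T u v Htree Huv x (subsetP su _ xS) (subsetP sv _ xS)).
by rewrite cards2 (tree_neq Htree Huv).
Qed.

Lemma uv_sub : ([set u; v] \subset Vu) && ([set u; v] \subset Vv).
Proof.
rewrite !subUset !sub1set u_Vu v_Vu.
by rewrite -!Vu_swap u_Vu v_Vu.
Qed.

Lemma parting_inj : {in meq p T &, injective (parting p T u v)}.
Proof.
move=> P1 P2 H1 H2 [e1 e2].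
have uv : u != v := tree_neq Htree Huv.
have [/andP [uU vU] /andP [uV vV]] : (u \in Vu) && (v \in Vu) /\ (u \in Vv) && (v \in Vv).
  by move: (uv_sub); rewrite !subUset !sub1set => /andP [-> ->].
apply/setP => [[a b]].
case: (eqVneq (a, b) (v, u)) => [E|nvu].
  case: E => -> ->.
  have n : (v, u) != (u, v) by rewrite xpair_eqE negb_and eq_sym uv.
  by rewrite -(part_v_mem P1 vV uV n) -(part_v_mem P2 vV uV n) e2.
case: (eqVneq (a, b) (u, v)) => [E|nuv].
  case: E => -> ->.
  have n : (u, v) != (v, u) by rewrite xpair_eqE negb_and uv.
  by rewrite -(part_u_mem P1 uU vU n) -(part_u_mem P2 uU vU n) e1.
case tab: (T a b); last first.
  have h : forall P, P \in meq p T -> ((a, b) \in P) = false.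
    by move=> P HP; apply/negP => /(meq_edge HP); rewrite /= tab.
  by rewrite !h.
case/orP: (@edge_cover p T u v Htree a b tab) => /andP [ha hb].
  by rewrite -(part_u_mem P1 ha hb nvu) -(part_u_mem P2 ha hb nvu) e1.
by rewrite -(part_v_mem P1 ha hb nuv) -(part_v_mem P2 ha hb nuv) e2.
Qed.
End Comb.

Import GRing.Theory.
Local Open Scope ring_scope.

Unset Implicit Arguments.
Section Alg.
Variable K : fieldType.

Lemma substE n m (h : 'I_n -> {mpoly K[m]}) f :
  subst K n m h f = \sum_(mm <- msupp f) f@_mm *: mmap1 h mm.
Proof. by rewrite /subst /mmap; apply: eq_bigr => i _; rewrite mul_mpolyC. Qed.

Lemma substD n m (h : 'I_n -> {mpoly K[m]}) : {morph subst K n m h : x y / x + y}.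
Proof. move=> x y; exact: mmapD. Qed.
Lemma subst0 n m (h : 'I_n -> {mpoly K[m]}) : subst K n m h 0 = 0.
Proof. exact: mmap0. Qed.
Lemma substM n m (h : 'I_n -> {mpoly K[m]}) : {morph subst K n m h : x y / x * y}.
Proof. move=> x y; rewrite /subst. exact: rmorphM. Qed.
Lemma substC n m (h : 'I_n -> {mpoly K[m]}) c : subst K n m h c%:MP = c%:MP.
Proof. exact: mmapC. Qed.
Lemma substX n m (h : 'I_n -> {mpoly K[m]}) i : subst K n m h 'X_i = h i.
Proof. by rewrite /subst mmapX mmap1U. Qed.
End Alg.
Section Alg2.
Variable K : fieldType.
Lemma subst_mmap1 n m (h : 'I_n -> {mpoly K[m]}) mm : subst K n m h 'X_[mm] = mmap1 h mm.
Proof. by rewrite /subst mmapX. Qed.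

Lemma subst_comp n m k (h1 : 'I_n -> {mpoly K[m]}) (h2 : 'I_m -> {mpoly K[k]}) f :
  subst K m k h2 (subst K n m h1 f) = subst K n k (fun i => subst K m k h2 (h1 i)) f.
Proof.
rewrite [subst K n m h1 f]substE [subst K n k _ f]substE.
rewrite (big_morph _ (substD K _ _ h2) (subst0 K _ _ h2)).
apply: eq_bigr => mm _.
rewrite -mul_mpolyC -/(subst K m k h2 _) substM substC mul_mpolyC; congr (_ *: _).
rewrite /mmap1 /subst rmorph_prod; apply: eq_bigr => i _; by rewrite rmorphXn.
Qed.

Lemma subst_eq n m (h1 h2 : 'I_n -> {mpoly K[m]}) f : h1 =1 h2 -> subst K n m h1 f = subst K n m h2 f.
Proof. move=> e; rewrite !substE; apply: eq_bigr => mm _; by rewrite (mmap1_eq _ e). Qed.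
End Alg2.

Set Implicit Arguments. Unset Strict Implicit.
Section AlgGen.
Variable K : fieldType.

Lemma subst1 n m (h : 'I_n -> {mpoly K[m]}) : subst K n m h 1 = 1.
Proof. by rewrite -mpolyC1 substC. Qed.

Lemma subst_prod n m (h : 'I_n -> {mpoly K[m]}) (I : Type) (r : seq I) (P : pred I) (F : I -> {mpoly K[n]}) :
  subst K n m h (\prod_(i <- r | P i) F i) = \prod_(i <- r | P i) subst K n m h (F i).
Proof. exact: (big_morph _ (substM K _ _ h) (subst1 h)). Qed.

Lemma subst_sum n m (h : 'I_n -> {mpoly K[m]}) (I : Type) (r : seq I) (P : pred I) (F : I -> {mpoly K[n]}) :
  subst K n m h (\sum_(i <- r | P i) F i) = \sum_(i <- r | P i) subst K n m h (F i).
Proof. exact: (big_morph _ (substD K _ _ h) (subst0 K _ _ h)). Qed.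

Lemma substXn n m (h : 'I_n -> {mpoly K[m]}) x k : subst K n m h (x ^+ k) = (subst K n m h x) ^+ k.
Proof. elim: k => [|k IH]; by rewrite ?expr0 ?subst1 // !exprS substM IH. Qed.

Lemma substZ n m (h : 'I_n -> {mpoly K[m]}) c x : subst K n m h (c *: x) = c *: subst K n m h x.
Proof. by rewrite -!mul_mpolyC substM substC. Qed.

Lemma substB n m (h : 'I_n -> {mpoly K[m]}) x y : subst K n m h (x - y) = subst K n m h x - subst K n m h y.
Proof. exact: mmapB. Qed.

Lemma subst_monom n m (h : 'I_n -> {mpoly K[m]}) (mm : 'X_{1..n}) :
  subst K n m h 'X_[mm] = \prod_(i < n) h i ^+ mm i.
Proof. by rewrite mpolyXE_id subst_prod; apply: eq_bigr => i _; rewrite substXn substX. Qed.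

Definition ismono m (q : {mpoly K[m]}) := exists mu, q = 'X_[mu].

Lemma ismono_prod m (I : Type) (r : seq I) (P : pred I) (F : I -> {mpoly K[m]}) :
  (forall i, P i -> ismono (F i)) -> ismono (\prod_(i <- r | P i) F i).
Proof.
move=> H; apply: (big_ind (ismono (m:=m))) => //.
- by exists 0%MM; rewrite mpolyX0.
- by move=> x y [a ->] [b ->]; exists (a + b)%MM; rewrite mpolyXD.
Qed.

Lemma ismono_exp m (q : {mpoly K[m]}) k : ismono q -> ismono (q ^+ k).
Proof. by case=> a ->; exists (a *+ k)%MM; rewrite mpolyXn. Qed.

Lemma ismono_subst n m (h : 'I_n -> {mpoly K[m]}) mm : (forall i, ismono (h i)) -> ismono (subst K n m h 'X_[mm]).
Proof. by move=> H; rewrite subst_monom; apply: ismono_prod => i _; apply: ismono_exp. Qed.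

Lemma var_inE (T : finType) (A : {set T}) n (emb : 'I_#|A| -> 'I_n) (j : 'I_#|A|) :
  var_in K T A n emb (enum_val j) = 'X_(emb j).
Proof.
rewrite /var_in; case: pickP => [j' /eqP e|/(_ j)]; last by rewrite eqxx.
by rewrite (enum_val_inj e).
Qed.

Lemma var_in_mono (T : finType) (A : {set T}) (a : T) : a \in A -> ismono (zvar K T A a).
Proof.
move=> aA; rewrite /zvar -(enum_rankK_in aA aA) var_inE.
by exists U_(enum_rank_in aA a)%MM.
Qed.

Lemma ig0 (R : comNzRingType) (S : R -> Prop) : ideal_gen R S 0.
Proof. by exists [::]; rewrite big_nil. Qed.

Lemma igD (R : comNzRingType) (S : R -> Prop) a b : ideal_gen R S a -> ideal_gen R S b -> ideal_gen R S (a + b).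
Proof.
case=> s1 [h1 ->] [s2 [h2 ->]]; exists (s1 ++ s2); rewrite big_cat; split => //.
move=> x xin; case: (List.in_app_or _ _ _ xin); [exact: h1 | exact: h2].
Qed.

Lemma igM (R : comNzRingType) (S : R -> Prop) c a : ideal_gen R S a -> ideal_gen R S (c * a).
Proof.
case=> s [h ->]; exists [seq (c * x.1, x.2) | x <- s]; split.
  by move=> x /List.in_map_iff [y [<- /h]].
by rewrite big_map mulr_sumr; apply: eq_bigr => x _; rewrite mulrA.
Qed.

Lemma igS (R : comNzRingType) (S : R -> Prop) g : S g -> ideal_gen R S g.
Proof. by move=> h; exists [:: (1, g)]; rewrite big_seq1 mul1r; split => // x [<-|]. Qed.

Lemma ig_sum (R : comNzRingType) (S : R -> Prop) (I : Type) (r : seq I) (P : pred I) (F : I -> R) :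
  (forall i, P i -> ideal_gen R S (F i)) -> ideal_gen R S (\sum_(i <- r | P i) F i).
Proof. move=> H; apply: (big_ind (ideal_gen R S)) => //; [exact: ig0 | exact: igD]. Qed.

Lemma big_pick1 (V : nmodType) (I : eqType) (s : seq I) (x : I) (F : I -> V) :
  uniq s -> x \in s -> \sum_(y <- s) (if x == y then F y else 0) = F x.
Proof.
move=> us xs; rewrite (big_rem x xs) /= eqxx big1_seq ?addr0 // => y /andP [_ yr].
case: eqP => // e; subst y; move: us yr; rewrite (perm_uniq (perm_to_rem xs)) /= => /andP [/negP h _].
by move/h.
Qed.

End AlgGen.

Section Main.
Variable K : fieldType.
Variables (p : nat) (T : rel 'I_p) (u v : 'I_p).
Hypothesis Htree : is_tree p T.
Hypothesis Huv : T u v.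

Local Notation Tu := (T_u p T u v).
Local Notation Tv := (T_v p T u v).
Local Notation MT := (meq p T).
Local Notation Mu := (meq p Tu).
Local Notation Mv := (meq p Tv).
Local Notation B := (bigsets p).
Local Notation Q := (Qpart p T u v).
Local Notation nB := #|bigsets p|.
Local Notation N := (#|Mu| + #|Mv|)%N.
Local Notation t S := (zvar K _ (bigsets p) S).
Local Notation Vu := (Vu p T u v).
Local Notation Vv := (Vv p T u v).

Definition hG (G : rel 'I_p) (j : 'I_#|meq p G|) : {mpoly K[nB]} :=
  \prod_(S in B | cimset p (rep_dag p (enum_val j)) S) t S.

Lemma psiE G f : psi K p G f = subst K _ _ (@hG G) f.
Proof. by []. Qed.

Lemma t_val (j : 'I_nB) : t (enum_val j) = 'X_j.
Proof. exact: var_inE. Qed.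

Lemma t_rank S (HS : S \in B) : t S = 'X_(enum_rank_in HS S).
Proof. by rewrite -{1}(enum_rankK_in HS HS) t_val. Qed.

Lemma subst_t m (h : 'I_nB -> {mpoly K[m]}) S (HS : S \in B) :
  subst K _ _ h (t S) = h (enum_rank_in HS S).
Proof. by rewrite (t_rank HS) substX. Qed.

Definition iu (i : 'I_#|MT|) : 'I_#|Mu| :=
  enum_rank_in (part_u_meq Htree Huv (enum_valP i)) (part_u p T u v (enum_val i)).
Definition iv (i : 'I_#|MT|) : 'I_#|Mv| :=
  enum_rank_in (part_v_meq Htree Huv (enum_valP i)) (part_v p T u v (enum_val i)).

Lemma iuK i : enum_val (iu i) = part_u p T u v (enum_val i).
Proof. by rewrite /iu enum_rankK_in // (part_u_meq Htree Huv (enum_valP i)). Qed.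
Lemma ivK i : enum_val (iv i) = part_v p T u v (enum_val i).
Proof. by rewrite /iv enum_rankK_in // (part_v_meq Htree Huv (enum_valP i)). Qed.

Definition lamu : 'I_nB -> {mpoly K[nB]} := fun j => if enum_val j \subset Vu then 'X_j else 1.
Definition lamv : 'I_nB -> {mpoly K[nB]} := fun j => if enum_val j \subset Vv then 'X_j else 1.

Lemma lam_u i : subst K _ _ lamu (@hG T i) = @hG Tu (iu i).
Proof.
rewrite /hG subst_prod iuK big_mkcondr [RHS]big_mkcondr; apply: eq_bigr => S HS.
rewrite (cim_u Htree Huv _ (enum_valP i)) (subst_t _ HS) /lamu enum_rankK_in //.
by case: (cimset _ _ _); case: (S \subset Vu) => //=; rewrite -t_rank.
Qed.

Lemma lam_v i : subst K _ _ lamv (@hG T i) = @hG Tv (iv i).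
Proof.
rewrite /hG subst_prod ivK big_mkcondr [RHS]big_mkcondr; apply: eq_bigr => S HS.
rewrite (cim_v Htree Huv _ (enum_valP i)) (subst_t _ HS) /lamv enum_rankK_in //.
by case: (cimset _ _ _); case: (S \subset Vv) => //=; rewrite -t_rank.
Qed.


Definition Phi (g : {mpoly K[#|MT|]}) : {mpoly K[N]} := phiQ K _ _ Mu Mv Q (rename K p T u v g).
Definition hPhi (i : 'I_#|MT|) : {mpoly K[N]} := 'X_(lshift #|Mv| (iu i)) * 'X_(rshift #|Mu| (iv i)).

Lemma zvar_rank (X : finType) (A : {set X}) x (HA : x \in A) : zvar K X A x = 'X_(enum_rank_in HA x).
Proof. by rewrite /zvar -{1}(enum_rankK_in HA HA) var_inE. Qed.

Lemma Phi_subst g : Phi g = subst K _ _ hPhi g.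
Proof.
rewrite /Phi /phiQ /rename subst_comp; apply: subst_eq => i /=.
have HQ : parting p T u v (enum_val i) \in Q by apply: imset_f; apply: enum_valP.
rewrite (zvar_rank HQ) substX enum_rankK_in //= /xvar /yvar -iuK -ivK !var_inE.
by [].
Qed.

Definition rhou : 'I_#|MT| -> {mpoly K[#|Mu|]} := fun i => 'X_(iu i).
Definition rhov : 'I_#|MT| -> {mpoly K[#|Mv|]} := fun i => 'X_(iv i).

Lemma Phi_monom m : Phi 'X_[m] =
  embx K _ _ Mu Mv (subst K _ _ rhou 'X_[m]) * emby K _ _ Mu Mv (subst K _ _ rhov 'X_[m]).
Proof.
rewrite Phi_subst /embx /emby !subst_comp !subst_monom -big_split /=; apply: eq_bigr => i _.
by rewrite /hPhi /rhou /rhov !substX exprMn.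
Qed.

Lemma psi_rho_u g : psi K p Tu (subst K _ _ rhou g) = subst K _ _ lamu (psi K p T g).
Proof. by rewrite !psiE !subst_comp; apply: subst_eq => i; rewrite /rhou substX lam_u. Qed.
Lemma psi_rho_v g : psi K p Tv (subst K _ _ rhov g) = subst K _ _ lamv (psi K p T g).
Proof. by rewrite !psiE !subst_comp; apply: subst_eq => i; rewrite /rhov substX lam_v. Qed.

Local Notation ISum := (ideal_sum K _ _ Mu Mv (imset_ideal K p Tu) (imset_ideal K p Tv)).

Lemma binom m m' : psi K p T 'X_[m] = psi K p T 'X_[m'] -> ISum (Phi 'X_[m] - Phi 'X_[m']).
Proof.
move=> e; rewrite !Phi_monom.
set A := subst K _ _ rhou 'X_[m]; set A' := subst K _ _ rhou 'X_[m'].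
set B' := subst K _ _ rhov 'X_[m']; set Bm := subst K _ _ rhov 'X_[m].
have -> : embx K _ _ Mu Mv A * emby K _ _ Mu Mv Bm - embx K _ _ Mu Mv A' * emby K _ _ Mu Mv B' =
   emby K _ _ Mu Mv Bm * embx K _ _ Mu Mv (A - A') + embx K _ _ Mu Mv A' * emby K _ _ Mu Mv (Bm - B').
  rewrite /embx /emby !substB; ring.
apply: igD; apply: igM; apply: igS.
  left; exists (A - A') => //.
  by rewrite /imset_ideal psiE substB -!psiE /A /A' !psi_rho_u e subrr.
right; exists (Bm - B') => //.
by rewrite /imset_ideal psiE substB -!psiE /Bm /B' !psi_rho_v e subrr.
Qed.

Lemma mpolyX_eqE n (a b : 'X_{1..n}) : ('X_[a] == 'X_[b] :> {mpoly K[n]}) = (a == b).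
Proof.
apply/eqP/eqP => [e|->//].
have h1 : ('X_[a] : {mpoly K[n]})@_a = 1 by rewrite mcoeffX eqxx.
move: h1; rewrite e mcoeffX; case: eqP => // _ /eqP; by rewrite eq_sym oner_eq0.
Qed.

Lemma hT_mono i : ismono (@hG T i).
Proof. apply: ismono_prod => S /andP [HS _]; exact: var_in_mono. Qed.

Lemma forward f : psi K p T f = 0 -> ISum (Phi f).
Proof.
move=> hf.
set s := msupp f.
pose key m := psi K p T 'X_[m].
have mono : forall m, ismono (key m) by move=> m; apply: ismono_subst => i; apply: hT_mono.
pose R k := nth 0%MM s (find (fun m' => key m' == k) s).
pose r m := R (key m).
have rs : forall m, m \in s -> (r m \in s) && (key (r m) == key m).
  move=> m ms; have hs : has (fun m' => key m' == key m) s by apply/hasP; exists m.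
  apply/andP; split; first by rewrite /r /R mem_nth // -has_find.
  exact: (nth_find 0%MM hs).
have PhiE : Phi f = \sum_(m <- s) f@_m *: Phi 'X_[m].
  rewrite Phi_subst substE; apply: eq_bigr => m _; by rewrite -subst_mmap1 -Phi_subst.
have -> : Phi f = \sum_(m <- s) f@_m *: (Phi 'X_[m] - Phi 'X_[r m]) + \sum_(m <- s) f@_m *: Phi 'X_[r m].
  rewrite PhiE -big_split /=; apply: eq_bigr => m _; by rewrite scalerBr subrK.
have zero : \sum_(m <- s) f@_m *: Phi 'X_[r m] = 0.
  rewrite big_seq (eq_bigr (fun m => f@_m *: \sum_(m' <- s) (if r m == m' then Phi 'X_[m'] else 0))); last first.
    move=> m ms; rewrite big_pick1 //; [exact: msupp_uniq | by case/andP: (rs m ms)].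
  rewrite -big_seq.
  rewrite (eq_bigr (fun m => \sum_(m' <- s) (if r m == m' then f@_m else 0) *: Phi 'X_[m'])); last first.
    by move=> m _; rewrite scaler_sumr; apply: eq_bigr => m' _; case: ifP; rewrite ?scaler0 ?scale0r.
  rewrite exchange_big /= big1_seq // => m' /andP [_ m's].
  rewrite -scaler_suml; apply/eqP; rewrite scaler_eq0; apply/orP; left; apply/eqP.
  case: (eqVneq (r m') m') => [rm'|nrm']; last first.
    rewrite big1_seq // => m /andP [_ ms]; case: eqP => // e; case/eqP: nrm'.
    have /andP [_ /eqP km] := rs m ms.
    by rewrite -e {1}/r km.
  have eqc : forall m, m \in s -> (r m == m') = (key m == key m').
    move=> m ms; apply/eqP/eqP => [<-|kk].
      by have /andP [_ /eqP ->] := rs m ms.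
    by rewrite /r kk -/(r m') rm'.
  rewrite big_seq (eq_bigr (fun m => if key m == key m' then f@_m else 0)); last first.
    by move=> m ms; rewrite eqc.
  rewrite -big_seq.
  have [mu' emu'] := mono m'.
  have : (psi K p T f)@_mu' = \sum_(m <- s) (if key m == key m' then f@_m else 0).
    rewrite psiE substE (big_morph (mcoeff mu') (mcoeffD mu') (mcoeff0 _ mu')).
    apply: eq_bigr => m _; rewrite mcoeffZ -subst_mmap1 -psiE -/(key m).
    have [mu emu] := mono m; rewrite emu emu' mcoeffX mpolyX_eqE.
    by case: eqP; rewrite ?mulr1 ?mulr0.
  by rewrite hf mcoeff0.
rewrite zero addr0 big_seq; apply: ig_sum => m ms; rewrite -mul_mpolyC; apply: igM; apply: binom.
case/andP: (rs m ms) => _ /eqP e; by rewrite /key in e; rewrite e.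
Qed.

Definition hTheta (k : 'I_N) : {mpoly K[nB]} :=
  match split k with
  | inl i => @hG Tu i
  | inr j => \prod_(S in B | cimset p (rep_dag p (enum_val j)) S && (S != [set u; v])) t S
  end.

Definition tau : 'I_nB -> {mpoly K[nB]} := fun j => if enum_val j == [set u; v] then 1 else 'X_j.

Lemma split_l (i : 'I_#|Mu|) : split (lshift #|Mv| i) = inl i.
Proof. exact: (unsplitK (inl i : 'I_#|Mu| + 'I_#|Mv|)). Qed.
Lemma split_r (j : 'I_#|Mv|) : split (rshift #|Mu| j) = inr j.
Proof. exact: (unsplitK (inr j : 'I_#|Mu| + 'I_#|Mv|)). Qed.

Lemma Theta_embx g : subst K _ _ hTheta (embx K _ _ Mu Mv g) = psi K p Tu g.
Proof. by rewrite /embx subst_comp psiE; apply: subst_eq => i; rewrite substX /hTheta split_l. Qed.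

Lemma Theta_emby g : subst K _ _ hTheta (emby K _ _ Mu Mv g) = subst K _ _ tau (psi K p Tv g).
Proof.
rewrite /emby psiE !subst_comp; apply: subst_eq => j; rewrite substX /hTheta split_r /hG subst_prod.
rewrite !big_mkcondr; apply: eq_bigr => S HS.
rewrite (subst_t _ HS) /tau enum_rankK_in // -t_rank.
by case: (cimset _ _ _); case: (S == _).
Qed.

Lemma Theta_Phi g : subst K _ _ hTheta (Phi g) = psi K p T g.
Proof.
rewrite Phi_subst psiE subst_comp; apply: subst_eq => i.
rewrite /hPhi substM !substX /hTheta split_l split_r /hG iuK ivK.
rewrite !big_mkcondr -big_split /=; apply: eq_bigr => S HS.
rewrite (cim_u Htree Huv _ (enum_valP i)) (cim_v Htree Huv _ (enum_valP i)).
case c: (cimset _ _ _) => /=; last by rewrite mulr1.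
have S2 : (1 < #|S|)%N by move: HS; rewrite inE.
case: (boolP (S \subset Vu)) => su; case: (boolP (S \subset Vv)) => sv /=.
- by rewrite (uv_set Htree Huv S2 su sv) eqxx mulr1.
- by rewrite mulr1.
- case: eqP => [eS|_]; last by rewrite mul1r.
  by move: su; rewrite eS; case/andP: (@uv_sub p T u v) => ->.
- by move: (cim_cover u v Htree (enum_valP i) c); rewrite (negbTE su) (negbTE sv).
Qed.

Lemma backward f : ISum (Phi f) -> psi K p T f = 0.
Proof.
case=> sq [hs e]; rewrite -Theta_Phi e.
elim: sq hs {e} => [|x sq IH] hs; first by rewrite big_nil subst0.
rewrite big_cons substD substM IH; last by move=> y yin; apply: hs; right.
case: (hs x (or_introl erefl)) => [[a Ia ->]|[b Ib ->]].
  by rewrite Theta_embx Ia mulr0 add0r.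
by rewrite Theta_emby Ib subst0 mulr0 add0r.
Qed.
End Main.

Unset Implicit Arguments.
Local Close Scope ring_scope.

Theorem theorem4p4 (K : fieldType) (p : nat) (T : rel 'I_p) (u v : 'I_p) :
  is_tree p T -> nonleaf_edge p T u v ->
  {in meq p T &, injective (parting p T u v)} /\
  (forall f : {mpoly K[#|meq p T|]},
     imset_ideal K p T f <->
     fiber_product K (pgraph p) (pgraph p) (meq p (T_u p T u v))
       (meq p (T_v p T u v)) (Qpart p T u v)
       (imset_ideal K p (T_u p T u v)) (imset_ideal K p (T_v p T u v))
       (rename K p T u v f)).
Proof.
move=> Ht /and3P [Huv _ _]; split; first exact: (parting_inj Ht Huv).
move=> f; split => h.
  exact: (forward Ht Huv h).
exact: (backward Ht Huv h).
Qed.
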